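(* Let $\mathcal{H}$ be a real Hilbert space and $F:\mathcal{H}\rightrightarrows\mathcal{H}$ a set-valued operator with $\operatorname{zer}F:=\{x:0\in F(x)\}\neq\varnothing$. Let $(\gamma_n)_{n}\subset(0,+\infty)$, and let $(\alpha_n)_n$ be nondecreasing with $\alpha_n\in[0,\alpha]$ for all $n$, for some $\alpha\in[0,\tfrac13)$. Assume there is a linear map $v:\mathcal{H}\to\mathcal{H}$ such that the pair $(F,v)$ is monotone and, for every $n$, $\gamma_nF+v$ is injective and $\operatorname{ran}v\subset\operatorname{ran}(\gamma_nF+v)$. Let $x_0,x_1\in\mathcal{H}$ and for $n\ge1$ define \[ y_n=x_n+\alpha_n(x_n-x_{n-1}),\qquad x_{n+1}=(\gamma_nF+v)^{-1}\big(v(y_n)\big), \] i.e. $x_{n+1}$ is the unique point with $v(y_n)\in\gamma_nF(x_{n+1})+v(x_{n+1})$. Let $x^*\in\operatorname{zer}F$ and $a_n:=\|v(x_n)-v(x^* )\|^2$. Then (i) the sequence $(a_n)$ is bounded; (ii) $\sum_{n=1}^{\infty}\|v(x_n)-v(x_{n-1})\|^2<+\infty$.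
   Context: For set-valued $F_1,F_2:\mathcal{H}\rightrightarrows\mathcal{H}$, the pair $(F_1,F_2)$ is monotone if $\langle x_1^*-y_1^*,x_2^*-y_2^*\rangle\ge0$ for all $x,y\in\mathcal{H}$, $x_1^*\in F_1(x)$, $y_1^*\in F_1(y)$, $x_2^*\in F_2(x)$, $y_2^*\in F_2(y)$. $\operatorname{ran}$ denotes the range. *)

(* Defs.v *)
From HB Require Import structures.
From mathcomp Require Import all_boot all_order all_algebra.
From mathcomp Require Import all_classical all_reals all_analysis.
Set Implicit Arguments. Unset Strict Implicit. Unset Printing Implicit Defensive.
Import Order.TTheory GRing.Theory Num.Theory.
Local Open Scope ring_scope.

(* A real Hilbert space is represented by a real vector space V (lmodType R)
   together with a function ip : V -> V -> R that is an inner product and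
   whose induced norm is complete. *)

Definition hnorm (R : realType) (V : lmodType R) (ip : V -> V -> R) (x : V) : R :=
  Num.sqrt (ip x x).

Definition is_inner_product (R : realType) (V : lmodType R) (ip : V -> V -> R) : Prop :=
  [/\ (forall x y, ip x y = ip y x),
      (forall (a : R) x y z, ip (a *: x + y) z = a * ip x z + ip y z),
      (forall x, 0 <= ip x x) &
      (forall x, ip x x = 0 -> x = 0)].

Definition ip_complete (R : realType) (V : lmodType R) (ip : V -> V -> R) : Prop :=
  forall u : nat -> V,
    (forall e : R, 0 < e -> exists N : nat, forall m n : nat,
        (N <= m)%N -> (N <= n)%N -> hnorm ip (u m - u n) < e) ->
    exists l : V, forall e : R, 0 < e -> exists N : nat, forall n : nat,
        (N <= n)%N -> hnorm ip (u n - l) < e.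

Definition is_hilbert (R : realType) (V : lmodType R) (ip : V -> V -> R) : Prop :=
  is_inner_product ip /\ ip_complete ip.

(* Set-valued operators H ⇉ H are relations: F x y  <->  y ∈ F(x). *)

Definition monotone_pair (R : realType) (V : lmodType R) (ip : V -> V -> R)
  (F1 F2 : V -> V -> Prop) : Prop :=
  forall x y x1 y1 x2 y2, F1 x x1 -> F1 y y1 -> F2 x x2 -> F2 y y2 ->
    0 <= ip (x1 - y1) (x2 - y2).

Definition single_valued (V : Type) (f : V -> V) : V -> V -> Prop :=
  fun x y => y = f x.

Definition scaled_plus (R : realType) (V : lmodType R) (g : R)
  (F : V -> V -> Prop) (v : V -> V) : V -> V -> Prop :=
  fun x y => exists f, F x f /\ y = g *: f + v x.

Definition op_injective (V : Type) (G : V -> V -> Prop) : Prop :=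
  forall x1 x2 y, G x1 y -> G x2 y -> x1 = x2.

Definition op_range (V : Type) (G : V -> V -> Prop) : V -> Prop :=
  fun y => exists x, G x y.

Definition zer (R : realType) (V : lmodType R) (F : V -> V -> Prop) : V -> Prop :=
  fun x => F x 0.

(* Main.v *)
From HB Require Import structures.
From mathcomp Require Import all_boot all_order all_algebra.
From mathcomp Require Import all_classical all_reals all_analysis.
From mathcomp Require Import ring lra.
Require Import Defs.
Import Order.TTheory GRing.Theory Num.Theory numFieldNormedType.Exports.
Local Open Scope ring_scope.

Section IP.
Variables (R : realType) (V : lmodType R) (ip : V -> V -> R).
Hypothesis Hip : is_inner_product ip.

Lemma ipDl x y z : ip (x + y) z = ip x z + ip y z.
Proof. have [_ H _ _] := Hip. by have := H 1 x y z; rewrite scale1r mul1r. Qed.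
Lemma ip0l z : ip 0 z = 0.
Proof. have := ipDl 0 0 z; rewrite addr0 => h; lra. Qed.
Lemma ipZl a x z : ip (a *: x) z = a * ip x z.
Proof. have [_ H _ _] := Hip. by rewrite -[a *: x]addr0 H ip0l addr0. Qed.
Lemma ipNl x z : ip (- x) z = - ip x z.
Proof. by rewrite -scaleN1r ipZl mulN1r. Qed.
Lemma ipC x y : ip x y = ip y x.
Proof. by have [H _ _ _] := Hip. Qed.
Lemma ipDr x y z : ip z (x + y) = ip z x + ip z y.
Proof. by rewrite ipC ipDl !(ipC z). Qed.
Lemma ipZr a x z : ip z (a *: x) = a * ip z x.
Proof. by rewrite ipC ipZl ipC. Qed.
Lemma ipNr x z : ip z (- x) = - ip z x.
Proof. by rewrite ipC ipNl ipC. Qed.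

Lemma key (P0 P1 P2 S : V) (t : R) :
  0 <= ip (P1 + t *: (P1 - P0) - P2) (P2 - S) ->
  0 <= t * ip ((P2 - P1) - (P1 - P0)) ((P2 - P1) - (P1 - P0)) ->
  ip (P2 - S) (P2 - S) - ip (P1 - S) (P1 - S)
   - t * (ip (P1 - S) (P1 - S) - ip (P0 - S) (P0 - S))
  <= 2 * t * ip (P1 - P0) (P1 - P0) - (1 - t) * ip (P2 - P1) (P2 - P1).
Proof.
rewrite !(ipDl, ipDr, ipNl, ipNr, ipZl, ipZr).
have e1 := ipC P0 P1; have e2 := ipC P0 P2; have e3 := ipC P0 S.
have e4 := ipC P1 P2; have e5 := ipC P1 S; have e6 := ipC P2 S.
move=> H1 H2.
nra.
Qed.
End IP.
Lemma seqlem (R : realType) (phi d a : nat -> R) (al : R) :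
 (forall n, 0 <= phi n) -> (forall n, 0 <= d n) -> 0 <= al -> al < 1/3 ->
 (forall n, 0 <= a n /\ a n <= al) -> (forall n m, (n <= m)%N -> a n <= a m) ->
 (forall m, phi m.+2 - phi m.+1 - a m.+1 * (phi m.+1 - phi m)
      <= 2 * a m.+1 * d m.+1 - (1 - a m.+1) * d m.+2) ->
 (exists M, forall n, phi n <= M) /\ cvgn (series (fun n => d n.+1)).
Proof.
move=> phi0 d0 al0 al3 ha hmono hD.
pose mu k := phi k.+1 - a k.+1 * phi k + 2 * a k.+1 * d k.+1.
pose c := 1 - 3 * al.
have c0 : 0 < c by rewrite /c; lra.
have step m : mu m.+1 + c * d m.+2 <= mu m.
  have := hD m; have [a1 a1l] := ha m.+1; have [a2 a2l] := ha m.+2.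
  have a12 := hmono _ _ (leqnSn m.+1).
  have p1 : 0 <= (a m.+2 - a m.+1) * phi m.+1 by apply: mulr_ge0; [lra|].
  have p2 : 0 <= (al - a m.+1) * d m.+2 by apply: mulr_ge0; [lra|].
  have p3 : 0 <= (al - a m.+2) * d m.+2 by apply: mulr_ge0; [lra|].
  have := d0 m.+2; have := d0 m.+1.
  rewrite /mu /c => *; lra.
have sum m : mu m + c * \sum_(0 <= k < m) d k.+2 <= mu 0.
  elim: m => [|m IH]; first by rewrite big_geq // mulr0 addr0.
  rewrite big_nat_recr //= mulrDr; have := step m; lra.
have sum0 m : 0 <= \sum_(0 <= k < m) d k.+2 by apply: sumr_ge0 => i _.
have mule m : mu m <= mu 0.
  have := sum m; have := mulr_ge0 (ltW c0) (sum0 m); lra.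
have muge m : phi m.+1 - al * phi m <= mu m.
  have [a1 a1l] := ha m.+1.
  have p1 : 0 <= (al - a m.+1) * phi m by apply: mulr_ge0; [lra|].
  have := mulr_ge0 a1 (d0 m.+1); rewrite /mu; lra.
pose K := phi 0 + `|mu 0| / (1 - al).
have hK : (1 - al) * K = (1 - al) * phi 0 + `|mu 0|.
  rewrite /K mulrDr; congr (_ + _); rewrite mulrC divfK //; apply/eqP => h; lra.
have Kb m : phi m <= K.
  elim: m => [|m IH].
    rewrite /K; have : 0 <= `|mu 0| / (1 - al).
      apply: divr_ge0 => //; lra.
    lra.
  have := muge m; have := mule m; have := ler_norm (mu 0).
  have := ler_wpM2l al0 IH; have := phi0 0.
  have h2 : (1 - al) * phi 0 >= 0 by apply: mulr_ge0 => //; lra.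
  lra.
split; first by exists K.
apply: nondecreasing_is_cvgn.
  apply/nondecreasing_seqP => n; rewrite seriesSr; have := d0 n.+1; lra.
pose B := d 1 + (mu 0 + al * K) / c.
have hB : c * B = c * d 1 + (mu 0 + al * K).
  rewrite /B mulrDr; congr (_ + _); rewrite mulrC divfK //; apply/eqP => h; lra.
exists B => _ [n _ <-].
have hs m : series (fun n => d n.+1) m.+1 <= B.
  rewrite /series /= big_nat_recl //.
  apply: (@le_trans _ _ (d 1 + (mu 0 + al * K) / c)); last by [].
  rewrite lerD2l ler_pdivlMr // mulrC.
  have := sum m; have := muge m; have := ler_wpM2l al0 (Kb m); have := phi0 m.+1.
  lra.
case: n => [|n]; last exact: hs.
apply: le_trans (hs 0%N).
by rewrite /series /= big_geq // big_nat1; apply: d0.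
Qed.

Theorem corollary4p1 (R : realType) (V : lmodType R) (ip : V -> V -> R)
  (F : V -> V -> Prop) (gamma alpha_ : nat -> R) (alpha : R)
  (v : {linear V -> V}) (x : nat -> V) (xstar : V) :
  is_hilbert ip ->
  (exists z, zer F z) ->
  (forall n, 0 < gamma n) ->
  0 <= alpha -> alpha < 1 / 3 ->
  (forall n, 0 <= alpha_ n /\ alpha_ n <= alpha) ->
  (forall n m, (n <= m)%N -> alpha_ n <= alpha_ m) ->
  monotone_pair ip F (single_valued v) ->
  (forall n, op_injective (scaled_plus (gamma n) F v)) ->
  (forall n y, op_range (single_valued v) y ->
       op_range (scaled_plus (gamma n) F v) y) ->
  (forall n, (1 <= n)%N ->
       scaled_plus (gamma n) F v (x n.+1)
         (v (x n + alpha_ n *: (x n - x n.-1)))) ->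
  zer F xstar ->
  (exists M : R, forall n, hnorm ip (v (x n) - v xstar) ^+ 2 <= M) /\
  cvgn (series (fun n => hnorm ip (v (x n.+1) - v (x n)) ^+ 2)).
Proof.
move=> Hh _ gpos al0 al3 ha hmono Hmon _ _ Hit Hz.
have Hip := Hh.1.
have ipge0 y : 0 <= ip y y by have [_ _ H _] := Hip.
have hn y : hnorm ip y ^+ 2 = ip y y by rewrite /hnorm sqr_sqrtr.
pose phi n := ip (v (x n) - v xstar) (v (x n) - v xstar).
pose d n := ip (v (x n) - v (x n.-1)) (v (x n) - v (x n.-1)).
have D m : phi m.+2 - phi m.+1 - alpha_ m.+1 * (phi m.+1 - phi m)
      <= 2 * alpha_ m.+1 * d m.+1 - (1 - alpha_ m.+1) * d m.+2.
  have [f [Hf E]] := Hit m.+1 isT.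
  have Hm := Hmon (x m.+2) xstar f 0 (v (x m.+2)) (v xstar) Hf Hz erefl erefl.
  have E' : gamma m.+1 *: f = v (x m.+1 + alpha_ m.+1 *: (x m.+1 - x m.+1.-1)) - v (x m.+2).
    by rewrite E addrK.
  rewrite linearD linearZ linearB /= in E'.
  rewrite /phi /d /=.
  apply: (@key _ _ ip Hip).
    rewrite -E' (@ipZl _ _ ip Hip); apply: mulr_ge0; first exact: ltW.
    by rewrite subr0 in Hm.
  by apply: mulr_ge0 => //; have [] := ha m.+1.
have [[M HM] Hc] := @seqlem _ phi d alpha_ alpha (fun n => ipge0 _) (fun n => ipge0 _) al0 al3 ha hmono D.
split.
  by exists M => n; rewrite hn; apply: HM.
have -> : (fun n => hnorm ip (v (x n.+1) - v (x n)) ^+ 2) = (fun n => d n.+1).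
  by apply: funext => n; rewrite hn.
exact: Hc.
Qed.
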